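(* Let $k\geq 1$ and $n\geq 2$ be integers and let $r$ be an integer with $0\leq r\leq n$. Then \[C_{k,n+r}C_{k,n-r}-C_{k,n}^2=8(k-1)^{n-r+1}\,B_{k,r}^2.\]
   Context: For an integer $k\geq 1$, the generalized balancing numbers are defined by $B_{k,0}=0$, $B_{k,1}=1$ and $B_{k,n}=3kB_{k,n-1}+(1-k)B_{k,n-2}$ for $n\geq 2$; the generalized balancing-Lucas numbers are defined by $C_{k,0}=1$, $C_{k,1}=3$ and $C_{k,n}=3kC_{k,n-1}+(1-k)C_{k,n-2}$ for $n\geq 2$. *)

(* Defs.v *)
From Stdlib Require Import ZArith.
Open Scope Z_scope.

Fixpoint gen_pair (k : Z) (a0 a1 : Z) (n : nat) : Z * Z :=
  match n with
  | O => (a0, a1)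
  | S m => let (x, y) := gen_pair k a0 a1 m in (y, 3 * k * y + (1 - k) * x)
  end.

Definition B (k : Z) (n : nat) : Z := fst (gen_pair k 0 1 n).
Definition C (k : Z) (n : nat) : Z := fst (gen_pair k 1 3 n).

Lemma B_0 k : B k 0 = 0. Proof. reflexivity. Qed.
Lemma B_1 k : B k 1 = 1. Proof. reflexivity. Qed.
Lemma C_0 k : C k 0 = 1. Proof. reflexivity. Qed.
Lemma C_1 k : C k 1 = 3. Proof. reflexivity. Qed.
Lemma B_rec k n : B k (S (S n)) = 3 * k * B k (S n) + (1 - k) * B k n.
Proof. unfold B; simpl; destruct (gen_pair k 0 1 n); reflexivity. Qed.
Lemma C_rec k n : C k (S (S n)) = 3 * k * C k (S n) + (1 - k) * C k n.
Proof. unfold C; simpl; destruct (gen_pair k 1 3 n); reflexivity. Qed.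

(* Main.v *)
Require Import Defs.
From Stdlib Require Import ZArith Lia.
Open Scope Z_scope.

Definition sol (k : Z) (X : nat -> Z) :=
  forall i, X (S (S i)) = 3 * k * X (S i) + (1 - k) * X i.

Lemma L0 k Z0 : sol k Z0 -> Z0 O = 0 -> forall j, Z0 j = B k j * Z0 1%nat.
Proof.
  intros HS H0 j0.
  assert (forall j, Z0 j = B k j * Z0 1%nat /\ Z0 (S j) = B k (S j) * Z0 1%nat) as H.
  { induction j as [|j IH].
    - rewrite B_0, B_1, H0. split; ring.
    - destruct IH as [I1 I2]. split; [exact I2|].
      rewrite HS, B_rec, I1, I2. ring. }
  apply H.
Qed.

Lemma Cas k X Y : sol k X -> sol k Y -> forall m,
  X (S m) * Y m - X m * Y (S m) = (k - 1) ^ Z.of_nat m * (X 1%nat * Y O - X O * Y 1%nat).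
Proof.
  intros HX HY m. induction m as [|m IH].
  - change (Z.of_nat 0) with 0; rewrite Z.pow_0_r; ring.
  - rewrite Nat2Z.inj_succ, Z.pow_succ_r by lia.
    rewrite HX, HY.
    transitivity ((k-1) * (X (S m) * Y m - X m * Y (S m))); [ring|].
    rewrite IH. ring.
Qed.

Lemma solC k r : sol k (fun i => C k (i + r)).
Proof. intro i. simpl. apply C_rec. Qed.
Lemma solCC k : sol k (C k).
Proof. intro i. apply C_rec. Qed.

Theorem mainTheorem4 (k : Z) (n r : nat) :
  1 <= k -> (2 <= n)%nat -> (r <= n)%nat ->
  C k (n + r) * C k (n - r) - C k n ^ 2
  = 8 * (k - 1) ^ Z.of_nat (n - r + 1) * B k r ^ 2.
Proof.
  intros _ _ Hr.
  set (m := (n - r)%nat).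
  replace n with (m + r)%nat by (unfold m; lia).
  replace (m + r - r)%nat with m by lia.
  set (Zf := fun j => C k (m + j + r) * C k m - C k (m + r) * C k (m + j)).
  assert (HZ : forall j, Zf j = B k j * Zf 1%nat).
  { apply L0.
    - intro i. unfold Zf.
      replace (m + S (S i) + r)%nat with (S (S (m + i + r))) by lia.
      replace (m + S i + r)%nat with (S (m + i + r)) by lia.
      replace (m + S (S i))%nat with (S (S (m + i))) by lia.
      replace (m + S i)%nat with (S (m + i)) by lia.
      rewrite !C_rec. ring.
    - unfold Zf. rewrite Nat.add_0_r. ring. }
  assert (HW : forall j, C k (S j) - 3 * C k j = B k j * (8 * (k - 1))).
  { intro j. rewrite (L0 k (fun j => C k (S j) - 3 * C k j)).
    - cbv beta. f_equal. rewrite (C_rec k 0), C_1, C_0. ring.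
    - intro i. cbv beta. rewrite (C_rec k (S i)), (C_rec k i). ring.
    - cbv beta. rewrite C_1, C_0. ring. }
  assert (H1 : Zf 1%nat = (k - 1) ^ Z.of_nat m * (8 * (k - 1) * B k r)).
  { unfold Zf.
    pose proof (Cas k (fun i => C k (i + r)) (C k) (solC k r) (solCC k) m) as HC.
    simpl in HC. replace (m + 1 + r)%nat with (S (m + r)) by lia.
    replace (m + 1)%nat with (S m) by lia.
    rewrite HC, C_0, C_1.
    pose proof (HW r) as Hw. replace (C k (S r) * 1 - C k r * 3) with (C k (S r) - 3 * C k r) by ring. rewrite Hw. ring. }
  pose proof (HZ r) as Hm. rewrite H1 in Hm. unfold Zf in Hm. cbv beta in Hm.
  rewrite Nat2Z.inj_add, Z.pow_add_r by lia.
  change (Z.of_nat 1) with 1. rewrite Z.pow_1_r.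
  replace (C k (m + r) ^ 2) with (C k (m + r) * C k (m + r)) by ring.
  rewrite Hm. ring.
Qed.
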